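(* Let $\gamma,\sigma:[a,b]\to V$ be continuous paths of bounded variation and let $\phi:\mathbb{N}\cup\{0\}\to\mathbb{R}$ be such that $\sum_kC^k|\phi(k)|(k!)^{-2}<\infty$ for every $C>0$. Then the truncated kernel $K_\phi^{(N)}(s,t)$ converges to $K_\phi^{\gamma,\sigma}(s,t)$ as $N\to\infty$, and \[ \left|K_\phi^{\gamma,\sigma}(s,t)-K_\phi^{(N)}(s,t)\right|\le\sum_{k=N+1}^\infty|\phi(k)|\,\frac{(L_s(\gamma)L_t(\sigma))^k}{(k!)^2}. \]
   Context: $V$ is a finite-dimensional real inner product space, $\langle\cdot,\cdot\rangle_k$ the induced Hilbert–Schmidt inner product on $V^{\otimes k}$. Signature: $S(\gamma)^0=1$, $S(\gamma)^k_{s,t}=\int_{s<u_1<\dots<u_k<t}d\gamma_{u_1}\otimes\cdots\otimes d\gamma_{u_k}$. $K_\phi^{\gamma,\sigma}(s,t)=\sum_{k\ge0}\phi(k)\langle S(\gamma)^k_{a,s},S(\sigma)^k_{a,t}\rangle_k$ and $K_\phi^{(N)}(s,t)=\sum_{k=0}^N\phi(k)\langle S(\gamma)^k_{a,s},S(\sigma)^k_{a,t}\rangle_k$. $L_s(\gamma)$ is the length (1-variation) of $\gamma|_{[a,s]}$. *)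

(* Defs.v *)
(* R : realType, V = R^d (Euclidean) *)
From mathcomp Require Import all_boot all_order all_algebra.
From mathcomp Require Import all_classical all_reals all_analysis.
Set Implicit Arguments. Unset Strict Implicit. Unset Printing Implicit Defensive.
Import Order.TTheory GRing.Theory Num.Theory.
Import numFieldNormedType.Exports.
Local Open Scope classical_set_scope.
Local Open Scope ring_scope.

Section Sig.
Variables (R : realType) (d : nat).

Definition enorm (v : 'rV[R]_d) : R := Num.sqrt (\sum_(i < d) v ord0 i ^+ 2).

Definition is_RS (f g : R -> R) (s t I : R) : Prop :=
  forall e : R, 0 < e -> exists2 del : R, 0 < del &
    forall (n : nat) (x xi : nat -> R),
      x 0%N = s -> x n = t ->
      (forall i, (i < n)%N -> x i <= xi i <= x i.+1) ->
      (forall i, (i < n)%N -> x i.+1 - x i < del) ->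
      `| \sum_(i < n) f (xi i) * (g (x i.+1) - g (x i)) - I | < e.

(* the RS integral (its value when it exists, 0 otherwise) *)
Definition RSint (f g : R -> R) (s t : R) : R := xget 0 (is_RS f g s t).

(* Signature coordinates: for a word w = i_1 ... i_k,
   S(gamma)^w_{a,s} = int_{a<u_1<...<u_k<s} dgamma^{i_1}_{u_1} ... dgamma^{i_k}_{u_k},
   defined as iterated RS integrals:  S^{w i}_{a,s} = int_a^s S^w_{a,u} dgamma^i(u).
   [sig_rev] takes the reversed word. *)
Fixpoint sig_rev (gam : R -> 'rV[R]_d) (a : R) (rw : seq 'I_d) (s : R) : R :=
  match rw with
  | [::] => 1
  | i :: rw' => RSint (sig_rev gam a rw') (fun u => gam u ord0 i) a s
  end.

Definition sigw (gam : R -> 'rV[R]_d) (a : R) (w : seq 'I_d) (s : R) : R :=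
  sig_rev gam a (rev w) s.

(* Hilbert--Schmidt inner product <S(gamma)^k_{a,s}, S(sigma)^k_{a,t}>_k on V^{(x)k}
   in the orthonormal basis e_{i_1} (x) ... (x) e_{i_k} *)
Definition sig_inner (gam sig : R -> 'rV[R]_d) (a : R) (k : nat) (s t : R) : R :=
  \sum_(w : k.-tuple 'I_d) sigw gam a w s * sigw sig a w t.

Definition KN (phi : nat -> R) (gam sig : R -> 'rV[R]_d) (a : R) (N : nat) (s t : R) : R :=
  \sum_(k < N.+1) phi k * sig_inner gam sig a k s t.

Definition Kphi (phi : nat -> R) (gam sig : R -> 'rV[R]_d) (a : R) (s t : R) : R :=
  limn (fun N => KN phi gam sig a N s t).

Definition path_variations (gam : R -> 'rV[R]_d) (a s : R) : set R :=
  [set r | exists n (x : nat -> R), [/\ x 0%N = a, x n = s,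
       (forall i, (i < n)%N -> x i <= x i.+1) &
       r = \sum_(i < n) enorm (gam (x i.+1) - gam (x i))]].

Definition bounded_var (gam : R -> 'rV[R]_d) (a b : R) : Prop :=
  has_ubound (path_variations gam a b).

Definition path_length (gam : R -> 'rV[R]_d) (a s : R) : R :=
  sup (path_variations gam a s).

End Sig.

(* Main.v *)
Require Import Defs.
From mathcomp Require Import all_boot all_order all_algebra.
From mathcomp Require Import all_classical all_reals all_analysis.
Import Order.TTheory GRing.Theory Num.Theory.
Import numFieldNormedType.Exports.
Local Open Scope classical_set_scope.
Local Open Scope ring_scope.

From mathcomp Require Import ring lra.
Set Implicit Arguments. Unset Strict Implicit. Unset Printing Implicit Defensive.
Section Nrm.
Variable R : realType.
Definition nrm (T : finType) (f : T -> R) := Num.sqrt (\sum_p f p ^+ 2).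

Lemma nrm_ge0 (T : finType) (f : T -> R) : 0 <= nrm f.
Proof. exact: sqrtr_ge0. Qed.

Lemma sumsq_ge0 (T : finType) (f : T -> R) : 0 <= \sum_p f p ^+ 2.
Proof. by apply: sumr_ge0 => p _; exact: sqr_ge0. Qed.

Lemma nrm_sq (T : finType) (f : T -> R) : nrm f ^+ 2 = \sum_p f p ^+ 2.
Proof. by rewrite /nrm sqr_sqrtr // sumsq_ge0. Qed.

Lemma CS2 (T : finType) (f g : T -> R) :
  (\sum_p f p * g p) ^+ 2 <= (\sum_p f p ^+ 2) * (\sum_p g p ^+ 2).
Proof.
have H : 0 <= \sum_i \sum_j (f i * g j - f j * g i) ^+ 2.
  by apply: sumr_ge0 => i _; apply: sumr_ge0 => j _; exact: sqr_ge0.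
have E : \sum_i \sum_j (f i * g j - f j * g i) ^+ 2 =
   (\sum_p f p ^+ 2) * (\sum_p g p ^+ 2) *+ 2 - (\sum_p f p * g p) ^+ 2 *+ 2.
  transitivity (\sum_i \sum_j (f i ^+ 2 * g j ^+ 2 + f j ^+ 2 * g i ^+ 2
       - (f i * g i) * (f j * g j) *+ 2)).
    by apply: eq_bigr => i _; apply: eq_bigr => j _; ring.
  under eq_bigr => i _ do rewrite !big_split /= sumrN.
  rewrite !big_split /= sumrN.
  have S1 : \sum_i \sum_j f i ^+ 2 * g j ^+ 2 = (\sum_p f p ^+ 2) * (\sum_p g p ^+ 2).
    by rewrite mulr_suml; apply: eq_bigr => i _; rewrite mulr_sumr.
  have S2 : \sum_i \sum_j f j ^+ 2 * g i ^+ 2 = (\sum_p f p ^+ 2) * (\sum_p g p ^+ 2).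
    rewrite exchange_big /= mulr_suml; apply: eq_bigr => i _; rewrite mulr_sumr.
    by apply: eq_bigr => j _; rewrite mulrC.
  have S3 : \sum_i \sum_j (f i * g i) * (f j * g j) *+ 2 = (\sum_p f p * g p) ^+ 2 *+ 2.
    rewrite expr2 mulr_suml -sumrMnl; apply: eq_bigr => i _.
    by rewrite mulr_sumr -sumrMnl.
  by rewrite S1 S2 S3 mulr2n.
by move: H; rewrite E subr_ge0 lerMn2r.
Qed.

Lemma CS (T : finType) (f g : T -> R) :
  `|\sum_p f p * g p| <= nrm f * nrm g.
Proof.
rewrite -ler_sqr ?nnegrE ?mulr_ge0 ?nrm_ge0 //.
by rewrite exprMn !nrm_sq real_normK ?num_real // CS2.
Qed.

Lemma nrm_le (T : finType) (f g : T -> R) :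
  (forall p, `|f p| <= g p) -> nrm f <= nrm g.
Proof.
move=> H; apply: ler_wsqrtr; apply: ler_sum => p _.
have g0 : 0 <= g p by apply: le_trans (H p).
by rewrite -real_normK ?num_real // lerXn2r // nnegrE.
Qed.

Lemma nrm_add (T : finType) (f g : T -> R) :
  nrm (fun p => f p + g p) <= nrm f + nrm g.
Proof.
rewrite -ler_sqr ?nnegrE ?addr_ge0 ?nrm_ge0 //.
rewrite nrm_sq sqrrD !nrm_sq.
under eq_bigr => p _ do rewrite sqrrD.
rewrite !big_split /= -mulr2n lerD2r lerD2l lerMn2r /=.
apply: le_trans (CS f g); exact: ler_norm.
Qed.

Lemma nrm_sum (T : finType) n (F : nat -> T -> R) :
  nrm (fun p => \sum_(j < n) F j p) <= \sum_(j < n) nrm (F j).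
Proof.
elim: n => [|n IH].
  rewrite big_ord0 /nrm; under eq_bigr => p _ do rewrite big_ord0 expr0n /=.
  by rewrite big1 // sqrtr0.
rewrite big_ord_recr /=; under eq_fun => p do rewrite big_ord_recr /=.
apply: le_trans (nrm_add _ _) _; exact: lerD.
Qed.

Lemma nrm_const (T : finType) (c : R) :
  nrm (fun _ : T => c) = Num.sqrt (#|T|%:R) * `|c|.
Proof.
rewrite /nrm sumr_const -(mulr_natl (c ^+ 2)) sqrtrM // sqrtr_sqr.
done.
Qed.

Lemma nrm_pair (T1 T2 : finType) (f : T1 -> R) (g : T2 -> R) :
  nrm (fun p : T1 * T2 => f p.1 * g p.2) = nrm f * nrm g.
Proof.
rewrite /nrm -sqrtrM ?sumsq_ge0 //; congr Num.sqrt.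
rewrite -(pair_big xpredT xpredT (fun i j => (f i * g j) ^+ 2)) /= mulr_suml; apply: eq_bigr => i _.
by rewrite mulr_sumr; apply: eq_bigr => j _; rewrite exprMn.
Qed.

Lemma nrm_inj (T : finType) (h : T -> T) (f : T -> R) :
  injective h -> nrm (fun p => f (h p)) = nrm f.
Proof.
move=> hi; rewrite /nrm.
by rewrite [in RHS](reindex_inj hi).
Qed.
End Nrm.

Section Path.
Variables (R : realType) (d : nat) (gam : R -> 'rV[R]_d).

Lemma enorm_ge0 (v : 'rV[R]_d) : 0 <= enorm v.
Proof. exact: sqrtr_ge0. Qed.

Lemma PV_ext a x y r : x <= y -> path_variations gam a x r ->
  path_variations gam a y (r + enorm (gam y - gam x)).
Proof.
move=> xy [n [p [p0 pn pm ->]]].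
exists n.+1, (fun i => if (i <= n)%N then p i else y); split => //.
- by rewrite ltnn.
- move=> i; rewrite ltnS => ilen; rewrite ilen.
  case: (ltnP i n) => [iln | ni]; first by apply: pm.
  have E : i = n by apply/eqP; rewrite eqn_leq ilen ni.
  by rewrite E pn.
- rewrite big_ord_recr /= ltnn leqnn pn; congr (_ + _).
  apply/esym.
  apply: eq_bigr => [[i ilt]] _ /=.
  by rewrite ilt (ltnW ilt).
Qed.

Lemma PV_ge0 a x r : path_variations gam a x r -> 0 <= r.
Proof. by move=> [n [p [_ _ _ ->]]]; apply: sumr_ge0 => i _; exact: enorm_ge0. Qed.

Lemma PV_ne a x : a <= x -> path_variations gam a x !=set0.
Proof.
move=> ax; exists (0 + enorm (gam x - gam a)); apply: PV_ext => //.
exists 0%N, (fun _ => a); split => //; by rewrite big_ord0.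
Qed.

Variables (a b : R).
Hypothesis bv : bounded_var gam a b.

Lemma PV_ub x : x <= b -> has_ubound (path_variations gam a x).
Proof.
move=> xb; case: bv => M HM; exists M => r Hr.
apply: le_trans (HM _ (PV_ext xb Hr)).
by rewrite lerDl enorm_ge0.
Qed.

Lemma PL_ge0 x : a <= x -> x <= b -> 0 <= path_length gam a x.
Proof.
move=> ax xb; have [r Hr] := PV_ne ax.
apply: le_trans (PV_ge0 Hr) _.
by apply: sup_upper_bound => //; split; [exact: PV_ne | exact: PV_ub].
Qed.

Lemma PL_incr x y : a <= x -> x <= y -> y <= b ->
  path_length gam a x + enorm (gam y - gam x) <= path_length gam a y.
Proof.
move=> ax xy yb; rewrite -lerBrDr; apply: ge_sup; first exact: PV_ne.
move=> r Hr; rewrite lerBrDr.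
apply: sup_upper_bound (PV_ext xy Hr); split; last exact: PV_ub.
by apply: PV_ne; apply: le_trans xy.
Qed.
End Path.

Section Unif.
Variable R : realType.
Definition up (a u : R) n (j : nat) := a + (u - a) * (j%:R / n.+1%:R).

Lemma up0 a u n : up a u n 0 = a.
Proof. by rewrite /up mul0r mulr0 addr0. Qed.

Lemma upn a u n : up a u n n.+1 = u.
Proof. by rewrite /up divff ?pnatr_eq0 // mulr1 addrC subrK. Qed.

Lemma upS a u n j : up a u n j.+1 - up a u n j = (u - a) / n.+1%:R.
Proof.
rewrite /up -natr1; field; by rewrite addrC natr1 pnatr_eq0.
Qed.

Lemma up_mono a u n i j : a <= u -> (i <= j)%N -> up a u n i <= up a u n j.
Proof.
move=> au ij; rewrite /up lerD2l ler_wpM2l ?subr_ge0 //.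
by rewrite ler_pM2r ?invr_gt0 ?ltr0n // ler_nat.
Qed.

Lemma RS_unif (F G : R -> R) a u I : a <= u -> is_RS F G a u I ->
  forall e, 0 < e -> exists m : nat, forall n, (m <= n)%N ->
  `|\sum_(j < n.+1) F (up a u n j) * (G (up a u n j.+1) - G (up a u n j)) - I| < e.
Proof.
move=> au H e e0; have [del del0 Hd] := H e e0.
exists (Num.Def.trunc ((u - a) / del)) => n mn.
apply: Hd.
- exact: up0.
- exact: upn.
- by move=> i _; rewrite lexx up_mono.
- move=> i _; rewrite upS ltr_pdivrMr ?ltr0n // mulrC -ltr_pdivrMr //.
  apply: lt_le_trans (truncnS_gt _) _.
  by rewrite ler_nat ltnS.
Qed.

Lemma alg_ineq (x y : R) k : 0 <= x -> x <= y ->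
  (y - x) * (x ^+ k / k`!%:R) <= (y ^+ k.+1 - x ^+ k.+1) / k.+1`!%:R.
Proof.
move=> x0 xy.
have key : (y - x) * x ^+ k * k.+1%:R <= y ^+ k.+1 - x ^+ k.+1.
  rewrite subrXX /= -mulrA; apply: ler_wpM2l; first by rewrite subr_ge0.
  have -> : k.+1%:R = \sum_(i < k.+1) (1 : R) by rewrite sumr_const card_ord.
  rewrite mulr_sumr; apply: ler_sum => i _; rewrite mulr1.
  have ik : (i <= k)%N by rewrite -ltnS ltn_ord.
  rewrite -{1}(subnK ik) exprD.
  by rewrite ler_wpM2r ?exprn_ge0 // lerXn2r // nnegrE (le_trans x0).
have -> : (y - x) * (x ^+ k / k`!%:R) = (y - x) * x ^+ k * k.+1%:R / k.+1`!%:R.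
  rewrite factS natrM; field.
  by rewrite pnatr_eq0 -lt0n fact_gt0 addrC natr1 pnatr_eq0.
by apply: ler_wpM2r => //; rewrite invr_ge0 ler0n.
Qed.
End Unif.

Lemma nrm_bij (R : realType) (T1 T2 : finType) (h : T1 -> T2) (f : T2 -> R) :
  bijective h -> nrm (fun p => f (h p)) = nrm f.
Proof.
move=> hb; rewrite /nrm.
by rewrite [in RHS](reindex h (onW_bij _ hb)).
Qed.

Lemma nrm_abs (R : realType) (T : finType) (f : T -> R) :
  nrm (fun p => `|f p|) = nrm f.
Proof.
rewrite /nrm; have -> : \sum_p `|f p| ^+ 2 = \sum_p f p ^+ 2 => //.
by apply: eq_bigr => p _; rewrite real_normK // num_real.
Qed.

Section Sig.
Variables (R : realType) (d : nat) (gam : R -> 'rV[R]_d) (a b : R).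
Hypothesis bv : bounded_var gam a b.

Definition SN k u := nrm (fun t : k.-tuple 'I_d => sig_rev gam a t u).

Lemma tuple_bij k :
  bijective (fun p : 'I_d * k.-tuple 'I_d => [tuple of p.1 :: p.2]).
Proof.
exists (fun t : k.+1.-tuple 'I_d => (thead t, [tuple of behead t])).
  move=> [i t] /=; congr pair.
  by apply: val_inj.
by move=> t /=; rewrite [RHS]tuple_eta.
Qed.

Lemma SN_bound k : forall u, a <= u -> u <= b ->
  SN k u <= path_length gam a u ^+ k / k`!%:R.
Proof.
elim: k => [|k IH] u au ub.
  rewrite /SN (_ : (fun t : 0.-tuple 'I_d => sig_rev gam a t u) = fun=> 1).
    by rewrite nrm_const card_tuple expn0 sqrtr1 normr1 expr0 fact0 divr1 mulr1.
  by apply: funext => t; rewrite (tuple0 t).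
set L := path_length gam a.
pose G (p : 'I_d * k.-tuple 'I_d) := fun w : R => gam w ord0 p.1.
pose F (p : 'I_d * k.-tuple 'I_d) := sig_rev gam a p.2.
pose v p := RSint (F p) (G p) a u.
have E : SN k.+1 u = nrm v.
  rewrite /SN -(nrm_bij _ (tuple_bij k)); done.
rewrite E; apply/ler_addgt0Pr => e e0.
pose N := #|{: 'I_d * k.-tuple 'I_d}|.
have sN0 : 0 <= Num.sqrt (N%:R : R) by exact: sqrtr_ge0.
pose e' := e / (Num.sqrt (N%:R : R) + 1).
have e'0 : 0 < e' by rewrite divr_gt0 // ltr_wpDl.
pose x n j := up a u n j.
pose Rs p n := \sum_(j < n.+1) F p (x n j) * (G p (x n j.+1) - G p (x n j)).
have Hm : forall p, exists m : nat, forall n, (m <= n)%N ->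
    (exists I, is_RS (F p) (G p) a u I) -> `|Rs p n - v p| < e'.
  move=> p; case: (pselect (exists I, is_RS (F p) (G p) a u I)) => [ex|nex].
    have [m Hm] := RS_unif au (xgetPex 0 ex) e'0.
    by exists m => n mn _; exact: Hm.
  by exists 0%N => n _ /nex.
have [mf Hmf] := choice Hm.
pose n := (\max_p mf p)%N.
have Hv : forall p, `|v p| <= `|Rs p n| + e'.
  move=> p; case: (pselect (exists I, is_RS (F p) (G p) a u I)) => [ex|nex].
    have h := Hmf p n (leq_bigmax p) ex.
    have -> : v p = Rs p n + (v p - Rs p n) by rewrite addrC subrK.
    apply: le_trans (ler_normD _ _) _; rewrite lerD2l distrC; exact: ltW.
  rewrite /v /RSint xgetPN; first by rewrite normr0 addr_ge0 // ltW.
  by move=> I HI; apply: nex; exists I.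
apply: le_trans (nrm_le Hv) _.
apply: le_trans (nrm_add _ _) _.
rewrite nrm_const nrm_abs; apply: lerD; last first.
  rewrite gtr0_norm // /e' mulrA ler_pdivrMr ?ltr_wpDl // mulrC ler_wpM2l ?ltW //.
  by rewrite /N ltrDl ltr01.
have ab : a <= b by apply: le_trans ub.
have xin : forall j, (j <= n.+1)%N -> a <= x n j /\ x n j <= b.
  move=> j jn; split; first by rewrite -{1}(up0 a u n); apply: up_mono.
  apply: le_trans ub; rewrite -(upn a u n); exact: up_mono.
apply: le_trans (nrm_sum n.+1 (fun j p => F p (x n j) * (G p (x n j.+1) - G p (x n j)))) _.
pose f j := L (x n j) ^+ k.+1.
apply: (@le_trans _ _ (\sum_(j < n.+1) (f j.+1 - f j) / k.+1`!%:R)).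
  apply: ler_sum => j _.
  have [aj jb] := xin j (ltnW (ltn_ord j)).
  have [aj1 j1b] := xin j.+1 (ltn_ord j).
  have xx : x n j <= x n j.+1 by apply: up_mono.
  have -> : nrm (fun p => F p (x n j) * (G p (x n j.+1) - G p (x n j))) =
     enorm (gam (x n j.+1) - gam (x n j)) * SN k (x n j).
    have -> : enorm (gam (x n j.+1) - gam (x n j)) =
        nrm (fun i : 'I_d => gam (x n j.+1) ord0 i - gam (x n j) ord0 i).
      rewrite /enorm /nrm; apply: congr1; apply: eq_bigr => i _; by rewrite !mxE.
    rewrite /SN -nrm_pair; apply: congr1; apply: funext => -[i t].
    by rewrite /= mulrC.
  apply: (@le_trans _ _ ((L (x n j.+1) - L (x n j)) * (L (x n j) ^+ k / k`!%:R))).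
    apply: ler_pM; [exact: enorm_ge0 | exact: nrm_ge0 | | exact: IH].
    by rewrite lerBrDl; exact: (PL_incr bv aj xx j1b).
  apply: alg_ineq; first exact: (PL_ge0 bv aj jb).
  by rewrite -[L _]addr0; apply: le_trans (PL_incr bv aj xx j1b); rewrite lerD2l enorm_ge0.
rewrite -mulr_suml -(big_mkord xpredT (fun j => f j.+1 - f j)) telescope_sumr //.
rewrite /f /x upn up0; apply: ler_wpM2r; first by rewrite invr_ge0 ler0n.
by rewrite gerBl exprn_ge0 // (PL_ge0 bv (lexx a) ab).
Qed.
End Sig.

Lemma lim_abs_le (R : realType) (u w : nat -> R) lu lw :
  u @ \oo --> lu -> w @ \oo --> lw -> (forall M, `|u M| <= w M) -> `|lu| <= lw.
Proof.
move=> cu cw H; rewrite ler_norml; apply/andP; split.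
  apply: (ler_cvg_to (cvgN cw) cu); apply: nearW => M /=.
  by have := H M; rewrite ler_norml => /andP[].
apply: (ler_cvg_to cu cw); apply: nearW => M /=.
by have := H M; rewrite ler_norml => /andP[].
Qed.

Lemma series_shift (R : realType) (f : nat -> R) N M :
  series f (M + N)%N - series f N = \sum_(N <= k < M + N) f k.
Proof.
rewrite /series /= (@big_cat_nat _ _ _ N 0%N (M + N)%N xpredT f (leq0n N) (leq_addl M N)) /=.
by rewrite addrC addrK.
Qed.

Lemma sig_inner_bound (R : realType) (d : nat) (a b : R)
    (gam sig : R -> 'rV[R]_d) k s t :
  bounded_var gam a b -> bounded_var sig a b ->
  a <= s -> s <= b -> a <= t -> t <= b ->
  `|sig_inner gam sig a k s t| <=
    (path_length gam a s * path_length sig a t) ^+ k / (k`!%:R) ^+ 2.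
Proof.
move=> bg bs as_ sb at_ tb.
pose h := fun w : k.-tuple 'I_d => [tuple of rev w].
have hi : injective h.
  move=> w1 w2 /(congr1 val) /= E; apply: val_inj => /=.
  by rewrite -(revK w1) E revK.
rewrite /sig_inner; apply: le_trans (CS _ _) _.
have E1 : nrm (fun w : k.-tuple 'I_d => sigw gam a w s) = SN gam a k s.
  by rewrite /SN -(nrm_inj (fun w : k.-tuple 'I_d => sig_rev gam a w s) hi).
have E2 : nrm (fun w : k.-tuple 'I_d => sigw sig a w t) = SN sig a k t.
  by rewrite /SN -(nrm_inj (fun w : k.-tuple 'I_d => sig_rev sig a w t) hi).
rewrite E1 E2.
have -> : (path_length gam a s * path_length sig a t) ^+ k / (k`!%:R) ^+ 2 =
  (path_length gam a s ^+ k / k`!%:R) * (path_length sig a t ^+ k / k`!%:R).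
  by rewrite exprMn expr2 invfM mulrACA.
apply: ler_pM; [exact: nrm_ge0 | exact: nrm_ge0 | |].
  exact: (SN_bound bg).
exact: (SN_bound bs).
Qed.

Unset Implicit Arguments.
Theorem mainTheorem5 (R : realType) (d : nat) (a b : R)
    (gam sig : R -> 'rV[R]_d) (phi : nat -> R) :
  a <= b ->
  {within `[a, b], continuous gam} ->
  {within `[a, b], continuous sig} ->
  bounded_var gam a b -> bounded_var sig a b ->
  (forall C : R, 0 < C ->
     cvgn (series (fun k => C ^+ k * `|phi k| / (k`!%:R) ^+ 2))) ->
  forall s t : R, s \in `[a, b] -> t \in `[a, b] ->
    cvgn (fun N => KN phi gam sig a N s t) /\
    forall N : nat,
      `| Kphi phi gam sig a s t - KN phi gam sig a N s t |
      <= limn (fun M => \sum_(N.+1 <= k < M)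
                 `|phi k| * (path_length gam a s * path_length sig a t) ^+ k
                 / (k`!%:R) ^+ 2).
Proof.
move=> ab _ _ bg bs Hphi s t.
rewrite !in_itv /= => /andP[as_ sb] /andP[at_ tb].
set C := path_length gam a s * path_length sig a t.
have C0 : 0 <= C by rewrite mulr_ge0 // (PL_ge0 bg, PL_ge0 bs).
pose term k := phi k * sig_inner gam sig a k s t.
pose bnd k := `|phi k| * C ^+ k / (k`!%:R) ^+ 2.
have bnd0 : forall k, 0 <= bnd k.
  move=> k; rewrite /bnd; apply: mulr_ge0.
    by apply: mulr_ge0 => //; exact: exprn_ge0.
  by rewrite invr_ge0; apply: exprn_ge0; exact: ler0n.
have hb : forall k, `|term k| <= bnd k.
  move=> k; rewrite /term normrM /bnd -mulrA ler_wpM2l //.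
  exact: (sig_inner_bound k bg bs as_ sb at_ tb).
have cb : cvgn (series bnd).
  have C1 : 0 < C + 1 by rewrite ltr_wpDl.
  apply: (series_le_cvg bnd0 _ _ (Hphi _ C1)).
    move=> k; apply: mulr_ge0.
      by apply: mulr_ge0 => //; apply: exprn_ge0; exact: ltW.
    by rewrite invr_ge0; apply: exprn_ge0; exact: ler0n.
  move=> k; rewrite /bnd [`|phi k| * _]mulrC ler_wpM2r ?invr_ge0 ?exprn_ge0 ?ler0n //.
  by rewrite ler_wpM2r // lerXn2r // ?nnegrE ?lerDl // addr_ge0.
have ct : cvgn (series term).
  apply: normed_cvg; apply: (series_le_cvg _ bnd0 hb cb) => k; exact: normr_ge0.
have KNE : (fun N => KN phi gam sig a N s t) = (fun N => series term N.+1).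
  by apply: funext => N; rewrite /KN /series /= big_mkord.
have cT : series term @ \oo --> limn (series term) by exact: ct.
have cT1 : (fun N => KN phi gam sig a N s t) @ \oo --> limn (series term).
  by rewrite KNE; rewrite -cvg_shiftS in cT; exact: cT.
split; first exact: cvgP cT1.
move=> N.
have -> : Kphi phi gam sig a s t = limn (series term).
  by rewrite /Kphi; apply: cvg_lim.
have cB : series bnd @ \oo --> limn (series bnd) by exact: cb.
have RHS : limn (fun M => \sum_(N.+1 <= k < M) bnd k) =
    limn (series bnd) - series bnd N.+1.
  apply: cvg_lim => //.
  rewrite -(cvg_shiftn N.+1).
  have -> : [sequence \sum_(N.+1 <= k < (n + N.+1)%N) bnd k]_n =
      (fun M => series bnd (M + N.+1)%N - series bnd N.+1).
    by apply: funext => M; rewrite series_shift.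
  apply: cvgB; last exact: cvg_cst.
  by rewrite (cvg_shiftn N.+1 (series bnd)).
rewrite /bnd in RHS; rewrite RHS.
have -> : KN phi gam sig a N s t = series term N.+1.
  by rewrite /KN /series /= big_mkord.
apply: (@lim_abs_le _ (fun M => series term (M + N.+1)%N - series term N.+1)
   (fun M => series bnd (M + N.+1)%N - series bnd N.+1)).
- apply: cvgB; last exact: cvg_cst.
  by rewrite (cvg_shiftn N.+1 (series term)).
- apply: cvgB; last exact: cvg_cst.
  by rewrite (cvg_shiftn N.+1 (series bnd)).
- move=> M; rewrite !series_shift.
  apply: le_trans (ler_norm_sum _ _ _) _.
  by apply: ler_sum => k _; exact: hb.
Qed.
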